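(* Let $L$ be an ordered two-component flat virtual link diagram with components $1$ and $2$, and let $1\cap 2$ denote the set of flat classical crossings at which a strand of component $1$ crosses a strand of component $2$. Then the integer $$i(L)=\sum_{x\in 1\cap 2}\operatorname{sgn}(x)$$ is invariant under flat virtual equivalence, i.e. it is unchanged by all flat classical Reidemeister moves and all flat virtual Reidemeister moves applied to the link diagram.
   Context: A flat virtual link diagram is a finite collection of oriented closed curves immersed in the plane whose only singularities are finitely many transverse double points, each of which is either a flat classical crossing (a crossing with no over/under information) or a virtual crossing (drawn encircled). Flat virtual equivalence is the equivalence relation generated by planar isotopy, the flat classical Reidemeister moves (the shadows of Reidemeister moves 1, 2, 3, with no over/under data) and the flat virtual Reidemeister moves (the virtual moves V1, V2, V3 involving only virtual crossings, and the mixed move in which a strand containing only virtual crossings is passed across a flat classical crossing). Flat moves may be applied between different components. For $x\in 1\cap 2$, $\operatorname{sgn}(x)=+1$ if the pair (tangent vector of component $1$ at $x$, tangent vector of component $2$ at $x$) is a positively oriented basis of the plane, and $\operatorname{sgn}(x)=-1$ otherwise. Virtual crossings do not contribute. *)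

(* Defs.v *)
(* Flat virtual 2-component link diagrams are modelled by
   their (ordered, two-component) flat Gauss diagrams. *)
From mathcomp Require Import all_boot all_algebra.
From Stdlib Require Import Relations.
Set Implicit Arguments. Unset Strict Implicit. Unset Printing Implicit Defensive.
Import GRing.Theory.

(* A passage of a component through a flat classical crossing: (label, mark).
   mark = true  iff the tangent vector of this strand is the FIRST vector of
   the positively oriented basis (tangent of this strand, tangent of the other
   strand) at that crossing.  Virtual crossings are not recorded. *)
Definition passage := (nat * bool)%type.
(* a component: the cyclic sequence of its passages through classical crossings *)
Definition word := seq passage.
Definition gauss2 := (word * word)%type.

Definition labels (w : word) : seq nat := map fst w.

Definition wf_gauss2 (L : gauss2) : Prop :=
  forall n, n \in labels (L.1 ++ L.2) ->
    count_mem (n, true) (L.1 ++ L.2) = 1%N /\ count_mem (n, false) (L.1 ++ L.2) = 1%N.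

(* ---- templates: a diagram with holes where a local move takes place ---- *)
Inductive item := Pass of nat & bool | Hole of nat.
Definition template := (seq item * seq item)%type.

Definition fill_word (f : nat -> word) (w : seq item) : word :=
  flatten (map (fun it => match it with Pass n b => [:: (n, b)] | Hole j => f j end) w).
Definition fillT (f : nat -> word) (T : template) : gauss2 :=
  (fill_word f T.1, fill_word f T.2).

Definition isHole (j : nat) (it : item) : bool :=
  if it is Hole j' then j' == j else false.
Definition template_ok (k : nat) (T : template) : bool :=
  all (fun it => if it is Hole j then (j < k)%N else true) (T.1 ++ T.2) &&
  all (fun j => count (isHole j) (T.1 ++ T.2) == 1%N) (iota 0 k).
Definition tlabels (T : template) : seq nat :=
  pmap (fun it => if it is Pass n _ then Some n else None) (T.1 ++ T.2).

Definition relabel (f : nat -> nat) (L : gauss2) : gauss2 :=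
  ([seq (f p.1, p.2) | p <- L.1], [seq (f p.1, p.2) | p <- L.2]).

(* flat R1: a kink on one strand *)
Definition R1fill (n : nat) (b : bool) (j : nat) : word := [:: (n, b); (n, ~~ b)].
(* flat R2: two strands (holes 0 and 1) crossing twice at n, m, with opposite
   signs; par = the second strand runs parallel (else antiparallel) *)
Definition R2fill (n m : nat) (b par : bool) (j : nat) : word :=
  match j with
  | 0 => [:: (n, b); (m, ~~ b)]
  | _ => if par then [:: (n, ~~ b); (m, b)] else [:: (m, b); (n, ~~ b)]
  end.
(* flat R3: strands a, b, c (holes 0, 1, 2), crossings x = a∩b, y = a∩c,
   z = b∩c.  fa = along a, x comes before y; fb = along b, x before z;
   fc = along c, y before z.  e = orientation class of the triangle.
   The admissible sign patterns (those realised by three oriented lines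
   bounding a triangle) are: sign(t_a,t_b) = e * f_a * f_b etc. *)
Definition R3fill (x y z : nat) (e fa fb fc : bool) (j : nat) : word :=
  let pab := (e == (fa == fb)) in
  let pac := (e == (fa == fc)) in
  let pbc := (e == (fb == fc)) in
  match j with
  | 0 => if fa then [:: (x, pab); (y, pac)] else [:: (y, pac); (x, pab)]
  | 1 => if fb then [:: (x, ~~ pab); (z, pbc)] else [:: (z, pbc); (x, ~~ pab)]
  | _ => if fc then [:: (y, ~~ pac); (z, ~~ pbc)] else [:: (z, ~~ pbc); (y, ~~ pac)]
  end.

Inductive flat_step : gauss2 -> gauss2 -> Prop :=
| step_rot1 (k : nat) (L : gauss2) : flat_step L (rot k L.1, L.2)
| step_rot2 (k : nat) (L : gauss2) : flat_step L (L.1, rot k L.2)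
| step_relabel (f : nat -> nat) (L : gauss2) : injective f -> flat_step L (relabel f L)
| step_R1 (T : template) (n : nat) (b : bool) :
    template_ok 1 T -> n \notin tlabels T ->
    flat_step (fillT (fun _ => [::]) T) (fillT (R1fill n b) T)
| step_R2 (T : template) (n m : nat) (b par : bool) :
    template_ok 2 T -> n \notin tlabels T -> m \notin tlabels T -> n != m ->
    flat_step (fillT (fun _ => [::]) T) (fillT (R2fill n m b par) T)
| step_R3 (T : template) (x y z : nat) (e fa fb fc : bool) :
    template_ok 3 T -> uniq [:: x; y; z] ->
    all (fun l => l \notin tlabels T) [:: x; y; z] ->
    flat_step (fillT (R3fill x y z e fa fb fc) T)
              (fillT (R3fill x y z e (~~ fa) (~~ fb) (~~ fc)) T).

(* flat virtual equivalence (virtual moves and planar isotopy act trivially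
   on Gauss diagrams) *)
Definition flat_equiv : gauss2 -> gauss2 -> Prop := clos_refl_sym_trans gauss2 flat_step.

Definition cross12 (L : gauss2) : seq nat :=
  undup [seq p.1 | p <- L.1 & p.1 \in labels L.2].
(* sgn x = +1 iff (tangent of comp. 1, tangent of comp. 2) is positive at x *)
Definition sgn12 (L : gauss2) (x : nat) : int :=
  if (x, true) \in L.1 then 1%R else (-1)%R.
Definition index12 (L : gauss2) : int := (\sum_(x <- cross12 L) sgn12 L x)%R.

(* Main.v *)
Require Import Defs.
From mathcomp Require Import all_boot all_algebra.
From Stdlib Require Import Relations.
Set Implicit Arguments. Unset Strict Implicit. Unset Printing Implicit Defensive.
Import GRing.Theory.
Local Open Scope ring_scope.

Definition Gb (a1t a1f a2t a2f : bool) : int :=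
  if (a1t || a1f) && (a2t || a2f) then (if a1t then 1 else -1) else 0.
Definition G (L : gauss2) (x : nat) : int :=
  Gb ((x,true) \in L.1) ((x,false) \in L.1) ((x,true) \in L.2) ((x,false) \in L.2).

Lemma mem_labels (w : word) x : (x \in labels w) = ((x,true) \in w) || ((x,false) \in w).
Proof.
apply/mapP/orP => [[[y c] Hp /= ->]|[H|H]]; last 2 first.
- by exists (x,true). - by exists (x,false).
by case: c Hp => Hp; [left|right].
Qed.

Lemma index_G L (S : seq nat) : uniq S -> {subset labels L.1 <= S} ->
  index12 L = \sum_(x <- S) G L x.
Proof.
move=> uS sub.
set C := cross12 L.
have memC x : (x \in C) = (x \in labels L.1) && (x \in labels L.2).
  rewrite /C /cross12 mem_undup; apply/mapP/andP.
    by move=> [p]; rewrite mem_filter => /andP[H1 H2] ->; split=> //; apply/mapP; exists p.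
  by move=> [/mapP[p Hp ->] H2]; exists p => //; rewrite mem_filter H2.
have -> : \sum_(x <- S) G L x = \sum_(x <- S | x \in C) sgn12 L x.
  rewrite [RHS]big_mkcond /=; apply: eq_bigr => x _.
  by rewrite /G /Gb memC !mem_labels /sgn12; case: ifP.
rewrite -big_filter; apply: perm_big; apply: uniq_perm.
- exact: undup_uniq.
- exact: filter_uniq.
move=> x; rewrite mem_filter; case Hx: (x \in C) => //=.
by apply/esym/sub; move: Hx; rewrite memC => /andP[].
Qed.

Lemma index_relabel f L : injective f -> index12 (relabel f L) = index12 L.
Proof.
move=> inj.
set g := fun p : passage => (f p.1, p.2).
have ig : injective g by move=> [a c] [a' c'] [/inj -> ->].
have lab w : labels (map g w) = map f (labels w) by rewrite /labels -!map_comp.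
rewrite /index12 /cross12 /relabel /= lab filter_map.
have -> : [seq p.1 | p <- [seq g i | i <- [seq x <- L.1 | preim g (fun p => p.1 \in map f (labels L.2)) x]]]
   = map f [seq p.1 | p <- L.1 & p.1 \in labels L.2].
  rewrite -!map_comp /=; congr map; apply: eq_filter => p /=.
  by rewrite (map_comp f fst) mem_map.
rewrite (undup_map_inj inj) big_map; apply: eq_bigr => x _.
by rewrite /sgn12 /= -[(f x, true)]/(g (x,true)) mem_map.
Qed.

Lemma index_meq (L L' : gauss2) : L.1 =i L'.1 -> L.2 =i L'.2 -> index12 L = index12 L'.
Proof.
move=> h1 h2.
have u := undup_uniq (labels L.1).
rewrite (@index_G L (undup (labels L.1))) //; last by move=> x; rewrite mem_undup.
rewrite (@index_G L' (undup (labels L.1))) //; last first.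
  by move=> x; rewrite mem_undup !mem_labels !h1.
by apply: eq_bigr => x _; rewrite /G !h1 !h2.
Qed.

Definition holes (w : seq item) : seq nat :=
  pmap (fun it => if it is Hole j then Some j else None) w.
Definition plabels (w : seq item) : seq nat :=
  pmap (fun it => if it is Pass n _ then Some n else None) w.
Definition E : nat -> word := fun _ => [::].

Lemma fill_cons f it w : fill_word f (it :: w) =
  (match it with Pass n b => [:: (n, b)] | Hole j => f j end) ++ fill_word f w.
Proof. by []. Qed.

Lemma mem_fill f w p : (p \in fill_word f w) =
  (p \in fill_word E w) || has (fun j => p \in f j) (holes w).
Proof.
elim: w => [|[n c|j] w IH] //; rewrite !fill_cons !mem_cat IH /=.
  by rewrite orbA.
by rewrite orbCA.
Qed.

Lemma fillE_lab w n c : (n, c) \in fill_word E w -> n \in plabels w.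
Proof.
elim: w => [|[n' c'|j] w IH] //; rewrite fill_cons mem_cat //=.
rewrite inE => /orP[/eqP[-> _]|/IH]; rewrite inE ?eqxx // => ->; exact: orbT.
Qed.

Lemma mem_holes j w : (j \in holes w) = (0 < count (isHole j) w)%N.
Proof.
elim: w => [|[n' c'|j'] w IH] //=; rewrite inE IH /=.
by rewrite eq_sym; case: (j' == j).
Qed.

Lemma mem_holes_lt k w j : all (fun it => if it is Hole j then (j < k)%N else true) w ->
  j \in holes w -> (j < k)%N.
Proof.
elim: w => [|[n' c'|j'] w IH] //=; rewrite inE => /andP[h1 h2] // /orP[/eqP->//|].
exact: IH.
Qed.

Lemma template_holes k T : template_ok k T -> forall j,
  ~~ ((j \in holes T.1) && (j \in holes T.2)) /\
  ((j \in holes T.1) || (j \in holes T.2) = (j < k)%N).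
Proof.
move=> /andP[ha hc] j; rewrite all_cat in ha; case/andP: ha => ha1 ha2.
case: (ltnP j k) => hjk.
  have := allP hc j; rewrite mem_iota add0n hjk => /(_ isT) /eqP.
  rewrite count_cat !mem_holes.
  case: (count _ T.1) => [|[|a]]; case: (count _ T.2) => [|[|b]] //=; by rewrite ?addnS.
have h1 : (j \in holes T.1) = false.
  by apply/negP => /(mem_holes_lt ha1); rewrite ltnNge hjk.
have h2 : (j \in holes T.2) = false.
  by apply/negP => /(mem_holes_lt ha2); rewrite ltnNge hjk.
by rewrite h1 h2.
Qed.

Lemma has_holes2 (s : seq nat) (P : pred nat) : (forall j, j \in s -> (j < 2)%N) ->
  has P s = ((0 \in s) && P 0%N) || ((1 \in s) && P 1%N).
Proof.
move=> hs; apply/hasP/orP.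
  move=> [j js Pj].
  move: js Pj (hs _ js); case: j => [|[|j]] js' Pj' h.
  - by left; apply/andP.
  - by right; apply/andP.
  - done.
by move=> [/andP[? ?]|/andP[? ?]]; [exists 0%N|exists 1%N].
Qed.

Lemma has_holes1 (s : seq nat) (P : pred nat) : (forall j, j \in s -> (j < 1)%N) ->
  has P s = ((0 \in s) && P 0%N).
Proof.
move=> hs; apply/hasP/andP => [[j js Pj]|[? ?]]; last by exists 0%N.
by move: js Pj (hs _ js); case: j => // -> ->.
Qed.

Lemma fill_eqmem f g w : (forall j, f j =i g j) -> fill_word f w =i fill_word g w.
Proof.
move=> h p; rewrite [LHS]mem_fill [RHS]mem_fill.
have -> : has (fun j => p \in f j) (holes w) = has (fun j => p \in g j) (holes w).
  by apply: eq_has => j; exact: h.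
by [].
Qed.

Lemma index_pw (L L' : gauss2) : (forall x, G L x = G L' x) -> index12 L = index12 L'.
Proof.
move=> h.
have u := undup_uniq (labels (L.1 ++ L'.1)).
rewrite (@index_G L _ u); last by move=> x hx; rewrite mem_undup /labels map_cat mem_cat hx.
rewrite (@index_G L' _ u); last by move=> x hx; rewrite mem_undup /labels map_cat mem_cat hx orbT.
by apply: eq_bigr => x _; exact: h.
Qed.

Lemma index_2pts (L L' : gauss2) n m : n != m ->
  (forall x, x != n -> x != m -> G L x = G L' x) ->
  G L n + G L m = G L' n + G L' m -> index12 L = index12 L'.
Proof.
move=> nm h hnm.
set r := [seq x <- undup (labels (L.1 ++ L'.1)) | (x != n) && (x != m)].
have u : uniq (n :: m :: r).
  rewrite /= !inE !mem_filter !eqxx /= orbF nm /=.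
  rewrite andbF /=; exact: filter_uniq (undup_uniq _).
have sub x : x \in labels (L.1 ++ L'.1) -> x \in n :: m :: r.
  move=> hx; rewrite !inE mem_filter mem_undup hx andbT.
  by case: (x == n); case: (x == m).
rewrite (@index_G L _ u); last by move=> x hx; apply: sub; rewrite /labels map_cat mem_cat hx.
rewrite (@index_G L' _ u); last by move=> x hx; apply: sub; rewrite /labels map_cat mem_cat hx orbT.
rewrite !big_cons !addrA hnm; congr (_ + _).
apply: eq_big_seq => x; rewrite mem_filter => /andP[/andP[xn xm] _]; exact: h.
Qed.

Lemma fresh_fill T n c : n \notin tlabels T ->
  ((n, c) \in fill_word E T.1) = false /\ ((n, c) \in fill_word E T.2) = false.
Proof.
rewrite /tlabels pmap_cat mem_cat negb_or => /andP[h1 h2].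
by split; apply/negP => /fillE_lab; apply/negP.
Qed.

Lemma R3mem x y z e fa fb fc j :
  R3fill x y z e fa fb fc j =i R3fill x y z e (~~fa) (~~fb) (~~fc) j.
Proof.
move=> p; case: j => [|[|j]]; case: fa; case: fb; case: fc;
  by rewrite /R3fill /= !inE orbC.
Qed.

Lemma other_hole a b : ~~ (a && b) -> a || b -> b = ~~ a.
Proof. by case: a; case: b. Qed.

Lemma G_fill f T x : G (fillT f T) x =
  Gb ((x,true) \in fill_word f T.1) ((x,false) \in fill_word f T.1)
     ((x,true) \in fill_word f T.2) ((x,false) \in fill_word f T.2).
Proof. by []. Qed.

Lemma step_R1_inv T n b : template_ok 1 T -> n \notin tlabels T ->
  index12 (fillT E T) = index12 (fillT (R1fill n b) T).
Proof.
move=> ok fr; apply: index_pw => x.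
have lt1 j : j \in holes T.1 -> (j < 1)%N.
  by move=> hj; have [_ <-] := template_holes ok j; rewrite hj.
have lt2 j : j \in holes T.2 -> (j < 1)%N.
  by move=> hj; have [_ <-] := template_holes ok j; rewrite hj orbT.
have [nb _] := template_holes ok 0.
rewrite !G_fill !(mem_fill (R1fill n b)) !(has_holes1 _ lt1) !(has_holes1 _ lt2) /R1fill.
case: (eqVneq x n) => [->|xn].
  have [f1 f2] := fresh_fill true fr; have [g1 g2] := fresh_fill false fr.
  rewrite f1 f2 g1 g2 !inE !xpair_eqE !eqxx !andTb.
  move: nb; case: (0 \in holes T.1); case: (0 \in holes T.2); by case: b.
by rewrite !inE !xpair_eqE (negbTE xn) !andFb !orbF !andbF !orbF.
Qed.

Lemma step_R2_inv T n m b par : template_ok 2 T -> n \notin tlabels T ->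
  m \notin tlabels T -> n != m ->
  index12 (fillT E T) = index12 (fillT (R2fill n m b par) T).
Proof.
move=> ok frn frm nm.
have lt1 j : j \in holes T.1 -> (j < 2)%N.
  by move=> hj; have [_ <-] := template_holes ok j; rewrite hj.
have lt2 j : j \in holes T.2 -> (j < 2)%N.
  by move=> hj; have [_ <-] := template_holes ok j; rewrite hj orbT.
have [a0 b0] := template_holes ok 0.
have [a1 b1] := template_holes ok 1.
have e0 := other_hole a0 (etrans b0 isT).
have e1 := other_hole a1 (etrans b1 isT).
have mn : m != n by rewrite eq_sym.
apply: (index_2pts nm).
  move=> x xn xm.
  rewrite !G_fill !(mem_fill (R2fill n m b par)) !(has_holes2 _ lt1) !(has_holes2 _ lt2) /R2fill.
  by case: par; rewrite !inE !xpair_eqE (negbTE xn) (negbTE xm) !andFb !orbF !andbF !orbF.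
have [f1 f2] := fresh_fill true frn; have [g1 g2] := fresh_fill false frn.
have [f1' f2'] := fresh_fill true frm; have [g1' g2'] := fresh_fill false frm.
rewrite !G_fill !(mem_fill (R2fill n m b par)) !(has_holes2 _ lt1) !(has_holes2 _ lt2) /R2fill.
rewrite f1 f2 g1 g2 f1' f2' g1' g2' e0 e1.
case: par; rewrite !inE !xpair_eqE !eqxx (negbTE nm) (negbTE mn) ?andTb ?andFb;
  by case: (0 \in holes T.1); case: (1 \in holes T.1); case: b.
Qed.

Lemma step_inv L L' : flat_step L L' -> index12 L = index12 L'.
Proof.
case => {L L'}.
- by move=> k L; apply: (@index_meq L (rot k L.1, L.2)) => p; rewrite /= ?mem_rot.
- by move=> k L; apply: (@index_meq L (L.1, rot k L.2)) => p; rewrite /= ?mem_rot.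
- by move=> f L inj; rewrite index_relabel.
- by move=> T n b ok fr; exact: step_R1_inv.
- by move=> T n m b par ok fn fm nm; exact: step_R2_inv.
move=> T x y z e fa fb fc _ _ _.
by apply: index_meq => p; apply: fill_eqmem => j; exact: R3mem.
Qed.

Theorem mainTheorem1 (L L' : gauss2) :
  wf_gauss2 L -> flat_equiv L L' -> index12 L = index12 L'.
Proof.
move=> _ H; elim: H => {L L'}.
- by move=> L L'; exact: step_inv.
- by [].
- by move=> L L' _ ->.
- by move=> L1 L2 L3 _ -> _ ->.
Qed.
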